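(* Let $\mathcal{A}$ be a finite-state invertible synchronous automaton over $\Sigma$ such that the semigroup $S(\mathcal{A})$ contains the identity map of $\Sigma^*$. Then the group of units of $S(\mathcal{A})$ is isomorphic to a self-similar group.
   Context: A synchronous automaton is $(Q,\Sigma,t,o)$ with $Q$ a set of states, $\Sigma$ a finite alphabet, $t:Q\times\Sigma\to Q$ and $o:Q\times\Sigma\to\Sigma$; it is invertible if for each $q$ the map $\sigma\mapsto o(q,\sigma)$ is a permutation of $\Sigma$. Each state $q$ induces $q:\Sigma^*\to\Sigma^*$ by $q(\emptyset)=\emptyset$, $q(\sigma w)=o(q,\sigma)\,q'(w)$ with $q'=t(q,\sigma)$. $S(\mathcal{A})$ is the semigroup generated by the states under composition. A self-similar group is the group generated by the states of an invertible synchronous automaton with possibly infinitely many states. *)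

(* Defs.v *)
From mathcomp Require Import all_boot.
Set Implicit Arguments. Unset Strict Implicit. Unset Printing Implicit Defensive.

Record automaton (Q Sigma : Type) := Automaton {
  trans : Q -> Sigma -> Q;
  out   : Q -> Sigma -> Sigma }.

Definition invertible (Q Sigma : Type) (A : automaton Q Sigma) : Prop :=
  forall q : Q, bijective (out A q).

Fixpoint act (Q Sigma : Type) (A : automaton Q Sigma) (q : Q) (w : seq Sigma)
  : seq Sigma :=
  match w with
  | [::] => [::]
  | s :: w' => out A q s :: act A (trans A q s) w'
  end.

Inductive in_semigroup (Q Sigma : Type) (A : automaton Q Sigma)
  : (seq Sigma -> seq Sigma) -> Prop :=
  | sg_gen (q : Q) : in_semigroup A (act A q)
  | sg_comp (f g : seq Sigma -> seq Sigma) :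
      in_semigroup A f -> in_semigroup A g -> in_semigroup A (f \o g).

(* Group of units of S(A) (the identity of Sigma^* lies in S(A) by hypothesis). *)
Definition unit_of_semigroup (Q Sigma : Type) (A : automaton Q Sigma)
  (f : seq Sigma -> seq Sigma) : Prop :=
  in_semigroup A f /\
  exists g, in_semigroup A g /\ f \o g = id /\ g \o f = id.

Inductive in_generated_group (Q Sigma : Type) (A : automaton Q Sigma)
  : (seq Sigma -> seq Sigma) -> Prop :=
  | gg_id : in_generated_group A id
  | gg_gen (q : Q) f : in_generated_group A f ->
      in_generated_group A (act A q \o f)
  | gg_inv (q : Q) (h f : seq Sigma -> seq Sigma) :
      cancel (act A q) h -> cancel h (act A q) ->
      in_generated_group A f -> in_generated_group A (h \o f).

Definition group_isomorphic (X Y : Type)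
  (U : (X -> X) -> Prop) (G : (Y -> Y) -> Prop) : Prop :=
  exists phi : (X -> X) -> (Y -> Y),
    (forall f, U f -> G (phi f)) /\
    (forall f g, U f -> U g -> phi (f \o g) = phi f \o phi g) /\
    (forall f g, U f -> U g -> phi f = phi g -> f = g) /\
    (forall h, G h -> exists2 f, U f & phi f = h).

(* Main.v *)
Require Import Defs.
From mathcomp Require Import all_boot.
From Stdlib Require Import FunctionalExtensionality.
Set Implicit Arguments. Unset Strict Implicit.

Section S.
Variables (Sigma Q : Type) (A : automaton Q Sigma).

Definition f1 (f : seq Sigma -> seq Sigma) (a : Sigma) := head a (f [:: a]).
Definition sec (f : seq Sigma -> seq Sigma) (a : Sigma) :=
  fun w => behead (f (a :: w)).

Definition Pseq (f : seq Sigma -> seq Sigma) :=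
  f [::] = [::] /\ forall a w, f (a :: w) = f1 f a :: sec f a w.

Lemma Pseq_comp f g : Pseq f -> Pseq g -> Pseq (f \o g).
Proof.
move=> [f0 fS] [g0 gS]; split; first by rewrite /= g0 f0.
move=> a w; rewrite /f1 /sec /= !gS fS /=.
by rewrite [f (f1 g a :: sec g a [::])]fS.
Qed.

Lemma sec_comp f g a : Pseq f -> Pseq g ->
  sec (f \o g) a = sec f (f1 g a) \o sec g a.
Proof.
move=> [f0 fS] [g0 gS]; apply: functional_extensionality => w.
by rewrite /sec /= gS fS.
Qed.

Lemma f1_comp f g a : Pseq f -> Pseq g -> f1 (f \o g) a = f1 f (f1 g a).
Proof.
move=> [f0 fS] [g0 gS]; by rewrite /f1 /= gS fS.
Qed.

Lemma semi_P f : in_semigroup A f ->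
  Pseq f /\ forall a, in_semigroup A (sec f a).
Proof.
elim=> [q|f' g _ [Pf Sf] _ [Pg Sg]].
- split; first by split.
  move=> a; have -> : sec (act A q) a = act A (trans A q a) by [].
  exact: sg_gen.
- split; first exact: Pseq_comp.
  move=> a; rewrite sec_comp //; exact: sg_comp.
Qed.

Lemma unit_sec f a : unit_of_semigroup A f -> unit_of_semigroup A (sec f a).
Proof.
move=> [Sf [g [Sg [fg gf]]]].
have [Pf Sf'] := semi_P Sf; have [Pg Sg'] := semi_P Sg.
split; first exact: Sf'.
exists (sec g (f1 f a)); split; first exact: Sg'.
have gfa : f1 g (f1 f a) = a by rewrite -f1_comp // gf.
split.
- by rewrite -{1}gfa -sec_comp // fg.
- by rewrite -sec_comp // gf.
Qed.

Lemma unit_out_bij f : unit_of_semigroup A f -> bijective (f1 f).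
Proof.
move=> [Sf [g [Sg [fg gf]]]].
have [Pf _] := semi_P Sf; have [Pg _] := semi_P Sg.
exists (f1 g) => a; by rewrite -f1_comp // ?gf ?fg.
Qed.

Definition UT := {f | unit_of_semigroup A f}.

Definition Bt (q : UT) (a : Sigma) : UT :=
  exist _ (sec (proj1_sig q) a) (unit_sec a (proj2_sig q)).
Definition Bo (q : UT) (a : Sigma) : Sigma := f1 (proj1_sig q) a.
Definition B := Automaton Bt Bo.

Lemma actB q w : act B q w = proj1_sig q w.
Proof.
elim: w q => [|a w IH] q.
- case: q => f Uf /=; have [[f0 _] _] := semi_P (proj1 Uf); by rewrite f0.
- case: q => f Uf; have [[_ fS] _] := semi_P (proj1 Uf).
  by rewrite /= IH /= fS.
Qed.

Lemma unit_comp f g : unit_of_semigroup A f -> unit_of_semigroup A g ->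
  unit_of_semigroup A (f \o g).
Proof.
move=> [Sf [f' [Sf' [ff' f'f]]]] [Sg [g' [Sg' [gg' g'g]]]].
split; first exact: sg_comp.
exists (g' \o f'); split; first exact: sg_comp.
split; apply: functional_extensionality => x /=.
- by have := congr1 (fun h => h (f' x)) gg' => /= ->; have := congr1 (fun h => h x) ff'.
- by have := congr1 (fun h => h (g x)) f'f => /= ->; have := congr1 (fun h => h x) g'g.
Qed.

End S.

Theorem mainTheorem13 (Sigma Q : finType) (A : automaton Q Sigma) :
  invertible A ->
  in_semigroup A id ->
  exists (Sigma' : finType) (Q' : Type) (B : automaton Q' Sigma'),
    invertible B /\
    group_isomorphic (unit_of_semigroup A) (in_generated_group B).
Proof.
move=> _ Sid.
exists Sigma, (UT A), (B A); split.
  by move=> q; exact: unit_out_bij (proj2_sig q).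
exists (fun f => f); split; [|split; [by []|split; [by []|]]].
- move=> f Uf.
  have -> : f = act (B A) (exist _ f Uf) \o id.
    by apply: functional_extensionality => w; rewrite /= actB.
  by apply: gg_gen; apply: gg_id.
- move=> h; elim=> [|q f _ [f' Uf <-]|q h' f c1 c2 _ [f' Uf <-]].
  + exists id => //; split => //; exists id; split => //.
  + exists (act (B A) q \o f') => //.
    have -> : act (B A) q = proj1_sig q
      by apply: functional_extensionality => w; rewrite actB.
    exact: unit_comp (proj2_sig q) Uf.
  + exists (h' \o f') => //; apply: unit_comp Uf.
    case: q c1 c2 => g [Sg [g' [Sg' [gg' g'g]]]] c1 c2.
    have -> : h' = g'.
      apply: functional_extensionality => y.
      have := congr1 (fun k => k y) gg' => /= e.
      have := c1 (g' y); rewrite actB /= e; exact.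
    split => //; exists g; split => //.
Qed.
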